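(* Suppose that the Collatz map $T$ has no cycle of positive integers other than the trivial cycle $\{1,2\}$. Then the operator $\mathcal{T}$ on $H_{ber}^2(D)/X$ is hypercyclic, i.e. there exists a vector $v\in H_{ber}^2(D)/X$ whose orbit $\{\mathcal{T}^n v: n\ge 0\}$ is dense in $H_{ber}^2(D)/X$.
   Context: $T:\mathbb{Z}\to\mathbb{Z}$ is the (reduced) Collatz map: $T(n)=\frac{3n+1}{2}$ for odd $n$ and $T(n)=\frac n2$ for even $n$. A cycle is a finite set $\{n_1,\dots,n_k\}$ with $T(n_i)=n_{i+1}$, $T(n_k)=n_1$. $D$ is the open unit disk. $H_{ber}^2(D)$ is the Bergman space of holomorphic $f$ on $D$ with $\|f\|^2=\int_D|f|^2\,dA<\infty$ (so $\|z^n\|^2=\frac{\pi}{n+1}$). The operator $\mathcal{T}$ acts on power series by $\sum_{n\ge0} a_nz^n\mapsto\sum_{n\ge0} a_n z^{T(n)}$ (equivalently $\mathcal{T}f(z)=(Sf)(\sqrt z)+\sqrt z\,(Af)(z^{3/2})$ with $S,A$ the even and odd parts of $f$); it is bounded on $H_{ber}^2(D)$, leaves $X=\operatorname{span}\{1,z,z^2\}$ invariant, and induces a bounded operator on the quotient Banach space $H_{ber}^2(D)/X$, still denoted $\mathcal{T}$. *)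

(* Defs.v *)
From Stdlib Require Import Reals ZArith List Lra.
From Coquelicot Require Import Coquelicot.
Import ListNotations.
Open Scope R_scope.

Definition collatzZ (n : Z) : Z :=
  if Z.even n then (n / 2)%Z else ((3 * n + 1) / 2)%Z.

Definition is_cycle (l : list Z) : Prop :=
  l <> [] /\
  forall i : nat, (i < length l)%nat ->
    collatzZ (nth i l 0%Z) = nth (Nat.modulo (S i) (length l)) l 0%Z.

Definition no_nontrivial_positive_cycle : Prop :=
  forall l : list Z, is_cycle l -> (forall x, In x l -> (0 < x)%Z) ->
    forall x : Z, In x l <-> (x = 1%Z \/ x = 2%Z).

(* T restricted to the natural numbers (exponents of power series). *)
Definition collatzN (n : nat) : nat := Z.to_nat (collatzZ (Z.of_nat n)).

(* Holomorphic functions on D are identified with their Taylor coefficient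
   sequences a : nat -> C.  Bergman norm: ||sum a_n z^n||^2 = sum pi/(n+1) |a_n|^2
   (the monomials z^n are orthogonal with ||z^n||^2 = pi/(n+1)). *)
Definition bergman_terms (a : nat -> C) (n : nat) : R :=
  PI / INR (S n) * (Cmod (a n))^2.

Definition in_bergman (a : nat -> C) : Prop := ex_series (bergman_terms a).

Definition bergman_norm (a : nat -> C) : R := sqrt (Series (bergman_terms a)).

(* The operator sum a_n z^n |-> sum a_n z^{T(n)}: the coefficient of z^m is the
   sum of a_n over the n with T(n) = m; all such n satisfy n <= 2m. *)
Definition collatz_op (a : nat -> C) (m : nat) : C :=
  sum_n (fun n => if Nat.eqb (collatzN n) m then a n else RtoC 0) (2 * m).

Definition in_X (x : nat -> C) : Prop := forall n : nat, (3 <= n)%nat -> x n = RtoC 0.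

(* Main.v *)
Require Import Defs.
From Stdlib Require Import Reals ZArith List.
From Coquelicot Require Import Coquelicot.
From Stdlib Require Import Lra Lia Classical IndefiniteDescription.
From Stdlib Require Cantor.
Open Scope R_scope.

Lemma collatzN_eq n : collatzN n = if Nat.even n then (n/2)%nat else ((3*n+1)/2)%nat.
Proof.
  unfold collatzN, collatzZ.
  destruct (Nat.even n) eqn:E.
  - assert (Z.even (Z.of_nat n) = true).
    { destruct (Nat.even_spec n) as [H _]. destruct (H E) as [k Hk]. subst n.
      rewrite Nat2Z.inj_mul. apply Z.even_mul. }
    rewrite H. rewrite <- (Nat2Z.id (n/2)). f_equal. rewrite Nat2Z.inj_div. reflexivity.
  - assert (Z.even (Z.of_nat n) = false).
    { assert (Nat.odd n = true) by (unfold Nat.odd; rewrite E; reflexivity).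
      destruct (Nat.odd_spec n) as [H1 _]. destruct (H1 H) as [k Hk]. subst n.
      rewrite Nat2Z.inj_add, Nat2Z.inj_mul. rewrite Z.even_add, Z.even_mul. reflexivity. }
    rewrite H. rewrite <- (Nat2Z.id ((3*n+1)/2)). f_equal. rewrite Nat2Z.inj_div.
    rewrite Nat2Z.inj_add, Nat2Z.inj_mul. reflexivity.
Qed.

Lemma collatzN_double m : collatzN (2*m) = m.
Proof.
  rewrite collatzN_eq. replace (Nat.even (2*m)) with true.
  - rewrite Nat.mul_comm, Nat.div_mul; lia.
  - symmetry. apply Nat.even_spec. exists m. reflexivity.
Qed.

Lemma collatzN_ge n : (n <= 2 * collatzN n)%nat.
Proof.
  rewrite collatzN_eq. destruct (Nat.even n) eqn:E.
  - destruct (proj1 (Nat.even_spec n) E) as [k ->].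
    rewrite Nat.mul_comm, Nat.div_mul; lia.
  - pose proof (Nat.div_mod (3*n+1) 2). pose proof (Nat.mod_upper_bound (3*n+1) 2). lia.
Qed.

Lemma collatzN_Z n : collatzZ (Z.of_nat n) = Z.of_nat (collatzN n).
Proof.
  unfold collatzN. rewrite Z2Nat.id; [reflexivity|].
  unfold collatzZ. destruct (Z.even _); apply Z.div_pos; lia.
Qed.

Definition Ti (t n : nat) : nat := Nat.iter t collatzN n.

Lemma Ti_S t n : Ti (S t) n = collatzN (Ti t n).
Proof. reflexivity. Qed.

Lemma Ti_add a b n : Ti (a + b) n = Ti a (Ti b n).
Proof. unfold Ti. apply Nat.iter_add. Qed.

Lemma Ti_pow t j : Ti t (2^t * j) = j.
Proof.
  revert j; induction t; intro j; simpl.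
  - lia.
  - replace ((2 ^ t + (2 ^ t + 0)) * j)%nat with (2^t * (2*j))%nat by lia.
    change (collatzN (Ti t (2 ^ t * (2 * j))) = j). rewrite IHt. apply collatzN_double.
Qed.

Lemma Ti_bound t i : (i <= 2^t * Ti t i)%nat.
Proof.
  induction t; simpl. lia.
  change (i <= (2 ^ t + (2 ^ t + 0)) * collatzN (Ti t i))%nat.
  pose proof (collatzN_ge (Ti t i)). nia.
Qed.

Lemma Ti_small t x : (x <= 2)%nat -> (Ti t x <= 2)%nat.
Proof.
  intro H; induction t; simpl. exact H.
  change (collatzN (Ti t x) <= 2)%nat.
  destruct (Ti t x) as [|[|[|p]]]; [vm_compute; lia..|lia].
Qed.


Lemma injective_escape (f : nat -> nat) :
  (forall a b, f a = f b -> a = b) -> forall M, exists G, forall t, (G <= t)%nat -> (M <= f t)%nat.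
Proof.
  intros Hinj M. induction M as [|M [G HG]].
  - exists 0%nat. intros; lia.
  - destruct (classic (exists t0, f t0 = M)) as [[t0 Ht0]|Hn].
    + exists (Nat.max G (S t0)). intros t Ht.
      assert (M <= f t)%nat by (apply HG; lia).
      assert (f t <> M) by (intro E; rewrite <- Ht0 in E; apply Hinj in E; lia). lia.
    + exists G. intros t Ht. assert (M <= f t)%nat by (apply HG; lia).
      assert (f t <> M) by (intro E; apply Hn; exists t; exact E). lia.
Qed.

Lemma no_cycle_above (Hc : no_nontrivial_positive_cycle) j a b :
  (a < b)%nat -> Ti a j = Ti b j -> (forall t, 3 <= Ti t j)%nat -> False.
Proof.
  intros Hab Heq Hge.
  set (L := (b - a)%nat).
  set (l := map (fun i => Z.of_nat (Ti (i + a) j)) (seq 0 L)).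
  assert (Hlen : length l = L) by (unfold l; rewrite length_map, length_seq; reflexivity).
  assert (Hnth : forall i, (i < L)%nat -> nth i l 0%Z = Z.of_nat (Ti (i + a) j)).
  { intros i Hi. unfold l. rewrite nth_indep with (d' := (fun i => Z.of_nat (Ti (i + a) j)) 0%nat)
      by (rewrite length_map, length_seq; exact Hi).
    rewrite (map_nth (fun i => Z.of_nat (Ti (i + a) j))). rewrite seq_nth by exact Hi. reflexivity. }
  assert (Hcyc : is_cycle l).
  { split.
    - intro E. rewrite E in Hlen. simpl in Hlen. unfold L in Hlen. lia.
    - intros i Hi. rewrite Hlen in *. rewrite Hnth by exact Hi. rewrite collatzN_Z.
      destruct (Nat.eq_dec (S i) L) as [E|E].
      + rewrite E, Nat.Div0.mod_same. rewrite Hnth by lia. f_equal.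
        change (collatzN (Ti (i + a) j)) with (Ti (S (i + a)) j).
        replace (S (i + a)) with b by (unfold L in E; lia). simpl. rewrite Heq. reflexivity.
      + rewrite Nat.mod_small by lia. rewrite Hnth by lia. reflexivity. }
  assert (Hpos : forall x, In x l -> (0 < x)%Z).
  { intros x Hx. unfold l in Hx. apply in_map_iff in Hx. destruct Hx as [i [<- _]].
    specialize (Hge (i + a)%nat). lia. }
  pose proof (proj2 (Hc l Hcyc Hpos 1%Z) (or_introl eq_refl)) as H1.
  unfold l in H1. apply in_map_iff in H1. destruct H1 as [i [Hi _]].
  specialize (Hge (i + a)%nat). lia.
Qed.

Lemma escape (Hc : no_nontrivial_positive_cycle) j M :
  exists G, forall t, (G <= t)%nat -> (Ti t j <= 2)%nat \/ (M <= Ti t j)%nat.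
Proof.
  destruct (classic (exists t0, Ti t0 j <= 2)%nat) as [[t0 Ht0]|Hn].
  - exists t0. intros t Ht. left. replace t with ((t - t0) + t0)%nat by lia.
    rewrite Ti_add. apply Ti_small. exact Ht0.
  - assert (Hge : forall t, (3 <= Ti t j)%nat).
    { intro t. destruct (le_lt_dec 3 (Ti t j)); auto. exfalso. apply Hn. exists t. lia. }
    assert (Hinj : forall a b, Ti a j = Ti b j -> a = b).
    { intros a b E. destruct (lt_eq_lt_dec a b) as [[H|H]|H]; auto.
      - exfalso. exact (no_cycle_above Hc j a b H E Hge).
      - exfalso. exact (no_cycle_above Hc j b a H (eq_sym E) Hge). }
    destruct (injective_escape (fun t => Ti t j) Hinj M) as [G HG].
    exists G. intros t Ht. right. apply HG; exact Ht.
Qed.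

Lemma sum_n_zeroG {G : AbelianMonoid} N : sum_n (fun _ => @zero G) N = zero.
Proof.
  induction N. rewrite sum_O; reflexivity. rewrite sum_Sn, IHN, plus_zero_l. reflexivity.
Qed.

Lemma sum_n_indG {G : AbelianMonoid} (x N : nat) (c : G) :
  sum_n (fun l => if Nat.eqb l x then c else zero) N = if Nat.leb x N then c else zero.
Proof.
  induction N.
  - rewrite sum_O. destruct x; reflexivity.
  - rewrite sum_Sn, IHN.
    destruct (Nat.leb x N) eqn:E1; destruct (Nat.eqb (S N) x) eqn:E2;
    destruct (Nat.leb x (S N)) eqn:E3;
    rewrite ?Nat.leb_le, ?Nat.leb_gt, ?Nat.eqb_eq, ?Nat.eqb_neq in *; try lia;
    rewrite ?plus_zero_l, ?plus_zero_r; reflexivity.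
Qed.

Lemma sum_n_ifG {G : AbelianMonoid} (b : bool) (u : nat -> G) N :
  (if b then sum_n u N else zero) = sum_n (fun l => if b then u l else zero) N.
Proof. destruct b. reflexivity. symmetry. apply sum_n_zeroG. Qed.

Lemma C0_zero : (RtoC 0) = @zero C_AbelianMonoid.
Proof. reflexivity. Qed.

Lemma iter_op_formula n (v : nat -> C) m B :
  (2^n * m <= B)%nat ->
  Nat.iter n collatz_op v m = sum_n (fun i => if Nat.eqb (Ti n i) m then v i else RtoC 0) B.
Proof.
  revert m B. induction n; intros m B HB.
  - simpl. rewrite C0_zero.
    rewrite (sum_n_ext _ (fun i => if Nat.eqb i m then v m else zero)).
    + rewrite sum_n_indG. replace (Nat.leb m B) with true. reflexivity.
      symmetry. apply Nat.leb_le. simpl in HB. lia.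
    + intro i. unfold Ti. simpl. destruct (Nat.eqb i m) eqn:E; [apply Nat.eqb_eq in E; subst|]; reflexivity.
  - change (Nat.iter (S n) collatz_op v m) with (collatz_op (Nat.iter n collatz_op v) m).
    unfold collatz_op at 1. rewrite C0_zero.
    rewrite (sum_n_ext_loc _ (fun l => sum_n (fun i => if Nat.eqb (collatzN l) m then
               (if Nat.eqb (Ti n i) l then v i else zero) else zero) B)).
    2:{ intros l Hl. rewrite <- sum_n_ifG. rewrite (IHn l B). reflexivity.
        simpl in HB. nia. }
    rewrite sum_n_switch.
    apply sum_n_ext. intro i.
    rewrite (sum_n_ext _ (fun l => if Nat.eqb l (Ti n i) then
          (if Nat.eqb (collatzN (Ti n i)) m then v i else zero) else zero)).
    + rewrite sum_n_indG. rewrite Ti_S.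
      destruct (Nat.eqb (collatzN (Ti n i)) m) eqn:E.
      * replace (Nat.leb (Ti n i) (2*m)) with true. reflexivity.
        symmetry. apply Nat.leb_le. apply Nat.eqb_eq in E. rewrite <- E. apply collatzN_ge.
      * destruct (Nat.leb _ _); reflexivity.
    + intro l. destruct (Nat.eqb (Ti n i) l) eqn:E1.
      * apply Nat.eqb_eq in E1. subst l. rewrite Nat.eqb_refl. reflexivity.
      * replace (Nat.eqb l (Ti n i)) with false. destruct (Nat.eqb _ m); reflexivity.
        symmetry. apply Nat.eqb_neq. apply Nat.eqb_neq in E1. lia.
Qed.

Lemma sum_n_R_le (a b : nat -> R) N : (forall i, (i <= N)%nat -> a i <= b i) -> sum_n a N <= sum_n b N.
Proof.
  induction N; intro H.
  - rewrite !sum_O. apply H; lia.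
  - rewrite !sum_Sn. change (sum_n a N + a (S N) <= sum_n b N + b (S N)).
    assert (sum_n a N <= sum_n b N) by (apply IHN; intros; apply H; lia).
    assert (a (S N) <= b (S N)) by (apply H; lia). lra.
Qed.

Lemma sum_n_R_nonneg (a : nat -> R) N : (forall i, (i <= N)%nat -> 0 <= a i) -> 0 <= sum_n a N.
Proof.
  intro H. replace 0 with (sum_n (fun _ => 0) N). apply sum_n_R_le. exact H.
  exact (sum_n_zeroG (G:=R_AbelianMonoid) N).
Qed.

Lemma sum_n_R_plus (a b : nat -> R) N : sum_n (fun i => a i + b i) N = sum_n a N + sum_n b N.
Proof. exact (sum_n_plus a b N). Qed.

Lemma sum_n_R_scal (c : R) (a : nat -> R) N : sum_n (fun i => c * a i) N = c * sum_n a N.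
Proof. exact (sum_n_mult_l (K:=R_Ring) c a N). Qed.

Lemma sum_n_extendG {G : AbelianMonoid} (a : nat -> G) K B :
  (forall i, (K < i)%nat -> a i = zero) -> (K <= B)%nat -> sum_n a B = sum_n a K.
Proof.
  intros H HB. induction HB. reflexivity.
  rewrite sum_Sn, IHHB, H by lia. apply plus_zero_r.
Qed.

Lemma Cmod_sum_le (z : nat -> C) N : Cmod (sum_n z N) <= sum_n (fun i => Cmod (z i)) N.
Proof.
  induction N.
  - rewrite !sum_O. lra.
  - rewrite !sum_Sn. change (Cmod (Cplus (sum_n z N) (z (S N))) <= sum_n (fun i => Cmod (z i)) N + Cmod (z (S N))).
    eapply Rle_trans. apply Cmod_triangle. lra.
Qed.

Lemma sum_n_C_zero (z : nat -> C) N : (forall i, (i <= N)%nat -> z i = RtoC 0) -> sum_n z N = RtoC 0.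
Proof.
  intro H. rewrite (sum_n_ext_loc z (fun _ => zero)). exact (sum_n_zeroG (G:=C_AbelianMonoid) N). intros; apply H; lia.
Qed.

Lemma single_sq (z : nat -> C) N :
  (forall a b, (a <= N)%nat -> (b <= N)%nat -> z a <> RtoC 0 -> z b <> RtoC 0 -> a = b) ->
  (Cmod (sum_n z N))^2 <= sum_n (fun i => (Cmod (z i))^2) N.
Proof.
  induction N; intro H.
  - rewrite !sum_O. lra.
  - rewrite !sum_Sn. change ((Cmod (Cplus (sum_n z N) (z (S N))))^2 <= sum_n (fun i => (Cmod (z i))^2) N + (Cmod (z (S N)))^2).
    assert (Hp : 0 <= sum_n (fun i => (Cmod (z i))^2) N) by (apply sum_n_R_nonneg; intros; apply pow2_ge_0).
    destruct (Ceq_dec (z (S N)) (RtoC 0)) as [E|E].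
    + rewrite E, Cplus_0_r, Cmod_0. assert (Cmod (sum_n z N) ^ 2 <= sum_n (fun i => Cmod (z i) ^ 2) N).
      apply IHN. intros; apply H; auto. replace (0 ^ 2) with 0 by ring; lra.
    + rewrite sum_n_C_zero. rewrite Cplus_0_l. lra.
      intros i Hi. destruct (Ceq_dec (z i) (RtoC 0)) as [E2|E2]; auto.
      exfalso. assert (i = S N) by (apply H; auto). lia.
Qed.

Lemma sum_ind_R_le (x M : nat) (c : R) : 0 <= c ->
  sum_n (fun m => if Nat.eqb m x then c else 0) M <= c.
Proof.
  intro Hc. assert (E : sum_n (fun m => if Nat.eqb m x then c else 0) M = if Nat.leb x M then c else 0)
    by exact (sum_n_indG (G:=R_AbelianMonoid) x M c). rewrite E. destruct (Nat.leb x M); lra.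
Qed.

Lemma geom_tail (k0 B : nat) :
  sum_n (fun k => if Nat.ltb k0 k then (1/2)^k else 0) B = (1/2)^k0 - (1/2)^(Nat.max B k0).
Proof.
  induction B.
  - rewrite sum_O. simpl. replace (Nat.max 0 k0) with k0 by lia. destruct k0; simpl; lra.
  - rewrite sum_Sn, IHB. change (plus ?a ?b) with (a + b).
    destruct (Nat.ltb k0 (S B)) eqn:E.
    + apply Nat.ltb_lt in E. replace (Nat.max B k0) with B by lia.
      replace (Nat.max (S B) k0) with (S B) by lia. simpl. lra.
    + apply Nat.ltb_ge in E. replace (Nat.max B k0) with k0 by lia.
      replace (Nat.max (S B) k0) with k0 by lia. lra.
Qed.

Lemma geom_all (B : nat) : sum_n (fun k => (1/2)^k) B = 2 - 2 * (1/2)^(S B).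
Proof.
  induction B.
  - rewrite sum_O. simpl. lra.
  - rewrite sum_Sn, IHB. change (plus ?a ?b) with (a + b). simpl. lra.
Qed.

Lemma series_bound (a : nat -> R) (B : R) :
  (forall n, 0 <= a n) -> (forall N, sum_n a N <= B) -> ex_series a /\ Series a <= B.
Proof.
  intros H0 HB.
  assert (Hinc : forall n, sum_n a n <= sum_n a (S n)).
  { intro n. rewrite sum_Sn. change (sum_n a n <= sum_n a n + a (S n)). specialize (H0 (S n)). lra. }
  destruct (ex_finite_lim_seq_incr (sum_n a) B Hinc HB) as [l Hl].
  assert (Hs : is_series a l) by exact Hl.
  split. exists l. exact Hs.
  rewrite (is_series_unique a l Hs).
  assert (Rbar_le l B). { eapply is_lim_seq_le. exact HB. exact Hl. apply is_lim_seq_const. }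
  exact H.
Qed.

Fixpoint nn (g : nat -> nat) (k : nat) : nat :=
  match k with O => g O | S k' => (nn g k' + g (S k'))%nat end.

Definition Sblk (y : nat -> nat -> C) (D g : nat -> nat) (n k m : nat) : C :=
  sum_n (fun j => if Nat.eqb (Ti n (2^(nn g k) * j)) m then y k j else RtoC 0) (D k).

Definition vv (y : nat -> nat -> C) (D g : nat -> nat) (i : nat) : C :=
  sum_n (fun k => Sblk y D g 0 k i) i.

Lemma nn_ge g k : (forall k, 1 <= g k)%nat -> (k < nn g k)%nat.
Proof. intro H. induction k; simpl. specialize (H 0%nat); lia. specialize (H (S k)); lia. Qed.

Lemma nn_step g k k' : (k < k')%nat -> (nn g k + g (S k) <= nn g k')%nat.
Proof.
  intro H. induction H. simpl. lia. simpl. lia.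
Qed.

Lemma nn_mono g k k' : (k <= k')%nat -> (nn g k <= nn g k')%nat.
Proof. intro H. induction H. lia. simpl. lia. Qed.

Lemma collapse (P : nat -> bool) (c : C) (x B : nat) :
  sum_n (fun i => if P i then (if Nat.eqb x i then c else RtoC 0) else RtoC 0) B
  = if Nat.leb x B then (if P x then c else RtoC 0) else RtoC 0.
Proof.
  rewrite C0_zero.
  rewrite (sum_n_ext _ (fun i => if Nat.eqb i x then (if P x then c else zero) else zero)).
  apply sum_n_indG.
  intro i. destruct (Nat.eqb x i) eqn:E.
  - apply Nat.eqb_eq in E. subst. rewrite Nat.eqb_refl. reflexivity.
  - replace (Nat.eqb i x) with false. destruct (P i); reflexivity.
    symmetry; apply Nat.eqb_neq; apply Nat.eqb_neq in E; lia.
Qed.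


Lemma Sblk0_zero y D g k i :
  (forall k j, (j < 3)%nat -> y k j = RtoC 0) -> (forall k, 1 <= g k)%nat ->
  (i < k)%nat -> Sblk y D g 0 k i = RtoC 0.
Proof.
  intros Hy0 Hg Hik. unfold Sblk. apply sum_n_C_zero. intros j Hj.
  destruct (Nat.eqb _ i) eqn:E; [|reflexivity].
  apply Nat.eqb_eq in E. unfold Ti in E; simpl in E.
  destruct (lt_dec j 3). apply Hy0; lia.
  exfalso. pose proof (nn_ge g k Hg). pose proof (Nat.pow_gt_lin_r 2 (nn g k) ltac:(lia)). nia.
Qed.

Lemma vv_ext y D g K i :
  (forall k j, (j < 3)%nat -> y k j = RtoC 0) -> (forall k, 1 <= g k)%nat ->
  (i <= K)%nat -> vv y D g i = sum_n (fun k => Sblk y D g 0 k i) K.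
Proof.
  intros Hy0 Hg HK. unfold vv. symmetry. apply sum_n_extendG; auto.
  intros k Hk. rewrite <- C0_zero. apply Sblk0_zero; auto.
Qed.

Lemma iter_formula y D g n m B :
  (forall k j, (j < 3)%nat -> y k j = RtoC 0) -> (forall k, 1 <= g k)%nat ->
  (2^n * m <= B)%nat ->
  Nat.iter n collatz_op (vv y D g) m = sum_n (fun k => Sblk y D g n k m) B.
Proof.
  intros Hy0 Hg HB. rewrite (iter_op_formula n _ m B HB).
  rewrite C0_zero.
  rewrite (sum_n_ext_loc _ (fun i => sum_n (fun k => if Nat.eqb (Ti n i) m then Sblk y D g 0 k i else zero) B)).
  2:{ intros i Hi. rewrite <- sum_n_ifG. rewrite (vv_ext y D g B i); auto. }
  rewrite sum_n_switch. apply sum_n_ext. intro k.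
  unfold Sblk at 1.
  rewrite (sum_n_ext _ (fun i => sum_n (fun j => if Nat.eqb (Ti n i) m then
       (if Nat.eqb (2^(nn g k) * j) i then y k j else zero) else zero) (D k))).
  2:{ intro i. rewrite <- sum_n_ifG. reflexivity. }
  rewrite sum_n_switch. unfold Sblk. apply sum_n_ext. intro j.
  pose proof (collapse (fun i => Nat.eqb (Ti n i) m) (y k j) (2^(nn g k) * j) B) as HC.
  rewrite <- C0_zero. rewrite HC.
  destruct (Nat.eqb (Ti n (2 ^ nn g k * j)) m) eqn:E.
  - replace (Nat.leb _ B) with true. reflexivity. symmetry. apply Nat.leb_le.
    apply Nat.eqb_eq in E. pose proof (Ti_bound n (2 ^ nn g k * j)). rewrite E in H. lia.
  - destruct (Nat.leb _ _); reflexivity.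
Qed.

Definition w (m : nat) : R := PI / INR (S m).

Lemma w_pos m : 0 < w m.
Proof. unfold w. apply Rdiv_lt_0_compat. apply PI_RGT_0. apply lt_0_INR; lia. Qed.

Lemma sum_n_ifR (b : bool) (u : nat -> R) N :
  (if b then sum_n u N else 0) = sum_n (fun l => if b then u l else 0) N.
Proof. exact (sum_n_ifG (G:=R_AbelianMonoid) b u N). Qed.

Lemma P_later g n k j : (n <= nn g k)%nat -> Ti n (2^(nn g k) * j) = (2^(nn g k - n) * j)%nat.
Proof.
  intro H. replace (2^(nn g k) * j)%nat with (2^n * (2^(nn g k - n) * j))%nat.
  apply Ti_pow. rewrite Nat.mul_assoc, <- Nat.pow_add_r. f_equal. f_equal. lia.
Qed.

Lemma P_earlier g n k j : (nn g k <= n)%nat -> Ti n (2^(nn g k) * j) = Ti (n - nn g k) j.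
Proof.
  intro H. replace n with ((n - nn g k) + nn g k)%nat at 1 by lia.
  rewrite Ti_add, Ti_pow. reflexivity.
Qed.

Lemma blk_pos y D g n k m :
  (forall k j, (j < 3)%nat -> y k j = RtoC 0) ->
  (n <= nn g k)%nat -> Sblk y D g n k m <> RtoC 0 ->
  exists j, (3 <= j <= D k)%nat /\ (2^(nn g k - n) * j = m)%nat.
Proof.
  intros Hy0 Hn Hne. apply NNPP. intro Hno. apply Hne. unfold Sblk. apply sum_n_C_zero.
  intros j Hj. destruct (Nat.eqb _ m) eqn:E; [|reflexivity].
  apply Nat.eqb_eq in E. rewrite P_later in E by exact Hn.
  destruct (lt_dec j 3). apply Hy0; lia. exfalso. apply Hno. exists j. split; [lia|exact E].
Qed.

Lemma range_disj g D n a b ja jb :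
  (a < b)%nat -> (n <= nn g a)%nat -> (ja <= D a)%nat -> (3 <= jb)%nat ->
  (D a < 3 * 2^(g (S a)))%nat -> (2^(nn g a - n) * ja <> 2^(nn g b - n) * jb)%nat.
Proof.
  intros Hab Hna Hja Hjb HD.
  pose proof (nn_step g a b Hab) as Hs.
  assert (2^(nn g a - n + g (S a)) <= 2^(nn g b - n))%nat by (apply Nat.pow_le_mono_r; lia).
  rewrite Nat.pow_add_r in H.
  assert (0 < 2^(nn g a - n))%nat by (apply Nat.neq_0_lt_0; apply Nat.pow_nonzero; lia).
  nia.
Qed.

Lemma Cmod_if_sq (b : bool) (z : C) : (Cmod (if b then z else RtoC 0))^2 = if b then (Cmod z)^2 else 0.
Proof. destruct b. reflexivity. rewrite Cmod_0. ring. Qed.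

Lemma L_point y D g n (F : nat -> bool) B m :
  (forall k j, (j < 3)%nat -> y k j = RtoC 0) ->
  (forall k, D k < 3 * 2^(g (S k)))%nat ->
  (forall k, F k = true -> (n + g k <= nn g k)%nat) ->
  (Cmod (sum_n (fun k => if F k then Sblk y D g n k m else RtoC 0) B))^2 <=
  sum_n (fun k => if F k then sum_n (fun j => if Nat.eqb (Ti n (2^(nn g k) * j)) m
                   then (Cmod (y k j))^2 else 0) (D k) else 0) B.
Proof.
  intros Hy0 HD HF.
  eapply Rle_trans. apply single_sq.
  - intros a b Ha Hb Hza Hzb.
    destruct (F a) eqn:Fa; [|contradiction]. destruct (F b) eqn:Fb; [|contradiction].
    pose proof (HF a Fa). pose proof (HF b Fb).
    destruct (blk_pos y D g n a m Hy0 ltac:(lia) Hza) as [ja [Hja Ea]].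
    destruct (blk_pos y D g n b m Hy0 ltac:(lia) Hzb) as [jb [Hjb Eb]].
    destruct (lt_eq_lt_dec a b) as [[Hl|He]|Hl]; auto; exfalso.
    + apply (range_disj g D n a b ja jb); auto; lia.
    + apply (range_disj g D n b a jb ja); auto; lia.
  - apply sum_n_R_le. intros k Hk. rewrite Cmod_if_sq. destruct (F k) eqn:Fk; [|idtac]. 2:{ apply Rle_refl. }
    pose proof (HF k Fk). unfold Sblk.
    eapply Rle_trans. apply single_sq.
    + intros a b Ha Hb Hza Hzb.
      destruct (Nat.eqb _ m) eqn:Ea; [|contradiction]. destruct (Nat.eqb (Ti n (2^(nn g k) * b)) m) eqn:Eb; [|contradiction].
      apply Nat.eqb_eq in Ea, Eb. rewrite P_later in Ea, Eb by lia. rewrite <- Eb in Ea.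
      apply Nat.mul_cancel_l in Ea; auto. apply Nat.pow_nonzero; lia.
    + apply sum_n_R_le. intros j Hj. rewrite Cmod_if_sq. apply Rle_refl.
Qed.

Lemma sum_n_zeroR N : sum_n (fun _ => 0) N = 0.
Proof. exact (sum_n_zeroG (G:=R_AbelianMonoid) N). Qed.

Lemma w_le_pow (P e : nat) : (3 * 2^e <= P)%nat -> w P <= PI / (3 * 2^e).
Proof.
  intro H. unfold w. unfold Rdiv. apply Rmult_le_compat_l. left; apply PI_RGT_0.
  apply Rinv_le_contravar. apply Rmult_lt_0_compat. lra. apply pow_lt; lra.
  apply le_INR in H. rewrite mult_INR, pow_INR in H.
  replace (INR 3) with 3 in H by (simpl; lra). replace (INR 2) with 2 in H by (simpl; lra).
  rewrite S_INR. lra.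
Qed.

Lemma inner_bound y g n k j M :
  (forall k j, (j < 3)%nat -> y k j = RtoC 0) -> (n + g k <= nn g k)%nat ->
  sum_n (fun m => w m * (if Nat.eqb (Ti n (2^(nn g k) * j)) m then (Cmod (y k j))^2 else 0)) M
  <= PI / (3 * 2^(g k)) * (Cmod (y k j))^2.
Proof.
  intros Hy0 Hn.
  destruct (lt_dec j 3) as [Hj|Hj].
  - rewrite Hy0 by exact Hj. rewrite Cmod_0.
    rewrite (sum_n_ext _ (fun _ => 0)). rewrite sum_n_zeroR. lra.
    intro m. destruct (Nat.eqb _ m); [replace (0^2) with 0 by ring|]; apply Rmult_0_r.
  - set (P := Ti n (2^(nn g k) * j)).
    assert (HP : (3 * 2^(g k) <= P)%nat).
    { unfold P. rewrite P_later by lia.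
      assert (2^(g k) <= 2^(nn g k - n))%nat by (apply Nat.pow_le_mono_r; lia). nia. }
    rewrite (sum_n_ext _ (fun m => if Nat.eqb m P then w P * (Cmod (y k j))^2 else 0)).
    + eapply Rle_trans. apply sum_ind_R_le.
      apply Rmult_le_pos. left; apply w_pos. apply pow2_ge_0.
      apply Rmult_le_compat_r. apply pow2_ge_0. apply w_le_pow. exact HP.
    + intro m. destruct (Nat.eqb P m) eqn:E.
      * apply Nat.eqb_eq in E. rewrite E, Nat.eqb_refl. reflexivity.
      * replace (Nat.eqb m P) with false. apply Rmult_0_r. symmetry. apply Nat.eqb_neq. apply Nat.eqb_neq in E. lia.
Qed.

Lemma L_bound y D g n (F : nat -> bool) M B :
  (forall k j, (j < 3)%nat -> y k j = RtoC 0) ->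
  (forall k, D k < 3 * 2^(g (S k)))%nat ->
  (forall k, F k = true -> (n + g k <= nn g k)%nat) ->
  (forall k, PI / (3 * 2^(g k)) * sum_n (fun j => (Cmod (y k j))^2) (D k) <= (1/2)^k) ->
  sum_n (fun m => w m * (Cmod (sum_n (fun k => if F k then Sblk y D g n k m else RtoC 0) B))^2) M
  <= sum_n (fun k => if F k then (1/2)^k else 0) B.
Proof.
  intros Hy0 HD HF HC2.
  set (X := fun k j m => if Nat.eqb (Ti n (2^(nn g k) * j)) m then (Cmod (y k j))^2 else 0).
  apply Rle_trans with (sum_n (fun m => w m * sum_n (fun k => if F k then sum_n (fun j => X k j m) (D k) else 0) B) M).
  { apply sum_n_R_le. intros m _. apply Rmult_le_compat_l. left; apply w_pos.
    apply L_point; auto. }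
  replace (sum_n (fun m => w m * sum_n (fun k => if F k then sum_n (fun j => X k j m) (D k) else 0) B) M)
    with (sum_n (fun k => if F k then sum_n (fun j => sum_n (fun m => w m * X k j m) M) (D k) else 0) B).
  2:{ transitivity (sum_n (fun m => sum_n (fun k => sum_n (fun j => if F k then w m * X k j m else 0) (D k)) B) M).
      - rewrite (sum_n_switch (fun m k => sum_n (fun j => if F k then w m * X k j m else 0) (D k))).
        apply sum_n_ext; intro k.
        rewrite (sum_n_switch (fun m j => if F k then w m * X k j m else 0)).
        destruct (F k). reflexivity.
        rewrite (sum_n_ext _ (fun _ => 0)). rewrite sum_n_zeroR; reflexivity.
        intro j. apply sum_n_zeroR.
      - apply sum_n_ext; intro m. rewrite <- sum_n_R_scal. apply sum_n_ext; intro k.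
        destruct (F k). rewrite <- sum_n_R_scal; reflexivity.
        rewrite sum_n_zeroR. first [apply Rmult_0_r | symmetry; apply Rmult_0_r]. }
  apply sum_n_R_le. intros k Hk. destruct (F k) eqn:Fk; [|apply Rle_refl].
  eapply Rle_trans. apply sum_n_R_le. intros j Hj. apply (inner_bound y g n k j M Hy0 (HF k Fk)).
  rewrite sum_n_R_scal. apply HC2.
Qed.

Lemma triple_switch (F : nat -> bool) (Dk : nat -> nat) (X : nat -> nat -> nat -> R) B M :
  sum_n (fun m => sum_n (fun k => if F k then sum_n (fun j => X k j m) (Dk k) else 0) B) M
  = sum_n (fun k => if F k then sum_n (fun j => sum_n (fun m => X k j m) M) (Dk k) else 0) B.
Proof.
  rewrite (sum_n_switch (fun m k => if F k then sum_n (fun j => X k j m) (Dk k) else 0)).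
  apply sum_n_ext; intro k. destruct (F k).
  - apply (sum_n_switch (fun m j => X k j m)).
  - apply sum_n_zeroR.
Qed.

Lemma Cmod_if (b : bool) (z : C) : Cmod (if b then z else RtoC 0) = if b then Cmod z else 0.
Proof. destruct b. reflexivity. apply Cmod_0. Qed.

Lemma E_bound y D g k0 M0 M B :
  (forall k j, (j < 3)%nat -> y k j = RtoC 0) -> (forall k, 1 <= g k)%nat ->
  (forall k j t, (k < k0)%nat -> (j <= D k)%nat -> (g k0 <= t)%nat -> (Ti t j <= 2)%nat \/ (M0 <= Ti t j)%nat) ->
  sum_n (fun m => if Nat.leb 3 m then w m * (Cmod (sum_n (fun k => if Nat.ltb k k0 then Sblk y D g (nn g k0) k m else RtoC 0) B))^2 else 0) M
  <= PI / INR (S M0) * (sum_n (fun k => if Nat.ltb k k0 then sum_n (fun j => Cmod (y k j)) (D k) else 0) B)^2.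
Proof.
  intros Hy0 Hg HC3.
  set (n := nn g k0).
  set (R0 := sum_n (fun k => if Nat.ltb k k0 then sum_n (fun j => Cmod (y k j)) (D k) else 0) B).
  set (X := fun k j m => if Nat.eqb (Ti n (2^(nn g k) * j)) m then Cmod (y k j) else 0).
  set (rho := fun m => sum_n (fun k => if Nat.ltb k k0 then sum_n (fun j => X k j m) (D k) else 0) B).
  set (E := fun m => sum_n (fun k => if Nat.ltb k k0 then Sblk y D g n k m else RtoC 0) B).
  assert (HX0 : forall k j m, 0 <= X k j m).
  { intros. unfold X. destruct (Nat.eqb _ _). apply Cmod_ge_0. lra. }
  assert (Ha : forall m, Cmod (E m) <= rho m).
  { intro m. unfold E, rho. eapply Rle_trans. apply Cmod_sum_le. apply sum_n_R_le. intros k _.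
    rewrite Cmod_if. destruct (Nat.ltb k k0); [|apply Rle_refl].
    unfold Sblk. eapply Rle_trans. apply Cmod_sum_le. apply sum_n_R_le. intros j _.
    rewrite Cmod_if. apply Rle_refl. }
  assert (Hb0 : forall m, 0 <= rho m).
  { intro m. apply sum_n_R_nonneg. intros k _. destruct (Nat.ltb k k0); [|lra].
    apply sum_n_R_nonneg. intros; apply HX0. }
  assert (Hb : forall m, rho m <= R0).
  { intro m. apply sum_n_R_le. intros k _. destruct (Nat.ltb k k0); [|lra].
    apply sum_n_R_le. intros j _. unfold X. destruct (Nat.eqb _ _). lra. apply Cmod_ge_0. }
  assert (Hc : forall m, (3 <= m)%nat -> (m < M0)%nat -> rho m = 0).
  { intros m H3 HM. unfold rho. rewrite (sum_n_ext_loc _ (fun _ => 0)). apply sum_n_zeroR.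
    intros k Hk. destruct (Nat.ltb k k0) eqn:Ek; [|reflexivity].
    apply Nat.ltb_lt in Ek.
    rewrite (sum_n_ext_loc _ (fun _ => 0)). apply sum_n_zeroR.
    intros j Hj. unfold X. destruct (Nat.eqb _ m) eqn:E1; [|reflexivity].
    exfalso. apply Nat.eqb_eq in E1.
    assert (Hkk : (nn g k + g k0 <= n)%nat).
    { unfold n. destruct k0 as [|k1]. lia. simpl.
      pose proof (nn_mono g k k1 ltac:(lia)). lia. }
    rewrite P_earlier in E1 by lia.
    destruct (HC3 k j (n - nn g k)%nat Ek Hj ltac:(lia)); lia. }
  assert (HR0 : 0 <= R0) by (eapply Rle_trans; [apply (Hb0 0%nat)|apply (Hb 0%nat)]).
  assert (HK : 0 < PI / INR (S M0)) by (apply Rdiv_lt_0_compat; [apply PI_RGT_0|apply lt_0_INR; lia]).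
  apply Rle_trans with (sum_n (fun m => PI / INR (S M0) * R0 * rho m) M).
  { apply sum_n_R_le. intros m _. destruct (Nat.leb 3 m) eqn:E3.
    - apply Nat.leb_le in E3. fold n. fold (E m).
      pose proof (Ha m). pose proof (Cmod_ge_0 (E m)).
      destruct (lt_dec m M0) as [HmM|HmM].
      + rewrite (Hc m E3 HmM) in *. assert (Cmod (E m) = 0) by lra. rewrite H1.
        replace (0^2) with 0 by ring. rewrite Rmult_0_r, Rmult_0_r. lra.
      + assert (Hw : w m <= PI / INR (S M0)).
        { unfold w, Rdiv. apply Rmult_le_compat_l. left; apply PI_RGT_0.
          apply Rinv_le_contravar. apply lt_0_INR; lia. apply le_INR. lia. }
        assert (Cmod (E m) ^ 2 <= R0 * rho m).
        { specialize (Hb m). specialize (Hb0 m). nra. }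
        pose proof (w_pos m). pose proof (pow2_ge_0 (Cmod (E m))).
        assert (0 <= R0 * rho m) by (apply Rmult_le_pos; auto).
        rewrite Rmult_assoc. apply Rmult_le_compat; auto. lra.
    - apply Rmult_le_pos. apply Rmult_le_pos; lra. apply Hb0. }
  rewrite sum_n_R_scal.
  replace (PI / INR (S M0) * R0 ^ 2) with (PI / INR (S M0) * R0 * R0) by ring.
  apply Rmult_le_compat_l. apply Rmult_le_pos; lra.
  unfold rho. rewrite triple_switch.
  apply sum_n_R_le. intros k _. destruct (Nat.ltb k k0); [|lra].
  apply sum_n_R_le. intros j _. unfold X.
  rewrite (sum_n_ext _ (fun m => if Nat.eqb m (Ti n (2 ^ nn g k * j)) then Cmod (y k j) else 0)).
  apply sum_ind_R_le. apply Cmod_ge_0.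
  intro m. rewrite Nat.eqb_sym. reflexivity.
Qed.

Lemma Sblk_self y D g k0 m :
  (forall k j, (D k < j)%nat -> y k j = RtoC 0) ->
  Sblk y D g (nn g k0) k0 m = y k0 m.
Proof.
  intro HyD. unfold Sblk.
  rewrite (sum_n_ext _ (fun j => if Nat.eqb j m then y k0 m else zero)).
  - rewrite sum_n_indG. destruct (Nat.leb m (D k0)) eqn:E. reflexivity.
    apply Nat.leb_gt in E. rewrite HyD by exact E. reflexivity.
  - intro j. rewrite Ti_pow. destruct (Nat.eqb j m) eqn:E. apply Nat.eqb_eq in E; subst; reflexivity.
    reflexivity.
Qed.

Lemma three_sq (a b c : R) : (a + b + c)^2 <= 3 * (a^2 + b^2 + c^2).
Proof. pose proof (pow2_ge_0 (a-b)). pose proof (pow2_ge_0 (b-c)). pose proof (pow2_ge_0 (a-c)). simpl in *. nra. Qed.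

Lemma assembly y D g M0 k0 (f : nat -> C) delta :
  (forall k j, (j < 3)%nat -> y k j = RtoC 0) ->
  (forall k j, (D k < j)%nat -> y k j = RtoC 0) ->
  (forall k, 1 <= g k)%nat ->
  (forall k, D k < 3 * 2^(g (S k)))%nat ->
  (forall k, PI / (3 * 2^(g k)) * sum_n (fun j => (Cmod (y k j))^2) (D k) <= (1/2)^k) ->
  (forall k j t, (k < k0)%nat -> (j <= D k)%nat -> (g k0 <= t)%nat -> (Ti t j <= 2)%nat \/ (M0 <= Ti t j)%nat) ->
  PI / INR (S M0) * (sum_n (fun k => if Nat.ltb k k0 then sum_n (fun j => Cmod (y k j)) (D k) else 0) k0)^2 <= (1/2)^k0 ->
  (forall M, sum_n (fun m => if Nat.leb 3 m then w m * (Cmod (y k0 m - f m))^2 else 0) M <= delta) ->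
  forall M, sum_n (bergman_terms (fun k => Nat.iter (nn g k0) collatz_op (vv y D g) k - f k
        - (if Nat.ltb k 3 then Nat.iter (nn g k0) collatz_op (vv y D g) k - f k else RtoC 0))%C) M
      <= 3 * (delta + 2 * (1/2)^k0).
Proof.
  intros Hy0 HyD Hg HC1 HC2 HC3 HR Happ M.
  set (n := nn g k0). set (u := Nat.iter n collatz_op (vv y D g)).
  set (B := (2^n * M + k0)%nat).
  set (E := fun m => sum_n (fun k => if Nat.ltb k k0 then Sblk y D g n k m else RtoC 0) B).
  set (L := fun m => sum_n (fun k => if Nat.ltb k0 k then Sblk y D g n k m else RtoC 0) B).
  assert (Hu : forall m, (m <= M)%nat -> u m = (y k0 m + E m + L m)%C).
  { intros m Hm. unfold u. rewrite (iter_formula y D g n m B Hy0 Hg) by (unfold B; nia).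
    unfold E, L.
    rewrite (sum_n_ext _ (fun k => plus (plus (if Nat.ltb k k0 then Sblk y D g n k m else RtoC 0)
                (if Nat.eqb k k0 then Sblk y D g n k0 m else zero))
                (if Nat.ltb k0 k then Sblk y D g n k m else RtoC 0))).
    - rewrite !sum_n_plus. rewrite sum_n_indG. replace (Nat.leb k0 B) with true.
      unfold n. rewrite Sblk_self by exact HyD. repeat change (@plus C_AbelianMonoid ?a ?b) with (Cplus a b). ring.
      symmetry; apply Nat.leb_le; unfold B; lia.
    - intro k. match goal with |- ?a = ?b => change (@eq C a b) end.
      repeat change (@plus C_AbelianMonoid ?a ?b) with (Cplus a b). change (@zero C_AbelianMonoid) with (RtoC 0).
      destruct (lt_eq_lt_dec k k0) as [[H|H]|H].
      + replace (Nat.ltb k k0) with true by (symmetry; apply Nat.ltb_lt; lia).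
        replace (Nat.eqb k k0) with false by (symmetry; apply Nat.eqb_neq; lia).
        replace (Nat.ltb k0 k) with false by (symmetry; apply Nat.ltb_ge; lia). ring.
      + subst. rewrite Nat.ltb_irrefl, Nat.eqb_refl. ring.
      + replace (Nat.ltb k k0) with false by (symmetry; apply Nat.ltb_ge; lia).
        replace (Nat.eqb k k0) with false by (symmetry; apply Nat.eqb_neq; lia).
        replace (Nat.ltb k0 k) with true by (symmetry; apply Nat.ltb_lt; lia). ring. }
  apply Rle_trans with (sum_n (fun m => 3 * ((if Nat.leb 3 m then w m * (Cmod (y k0 m - f m))^2 else 0)
       + (if Nat.leb 3 m then w m * (Cmod (E m))^2 else 0) + w m * (Cmod (L m))^2)) M).
  { apply sum_n_R_le. intros m Hm. unfold bergman_terms. fold (w m). fold u.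
    pose proof (w_pos m).
    destruct (Nat.ltb m 3) eqn:E3.
    - replace (u m - f m - (u m - f m))%C with (RtoC 0) by ring. rewrite Cmod_0.
      replace (Nat.leb 3 m) with false by (symmetry; apply Nat.leb_gt; apply Nat.ltb_lt in E3; lia).
      pose proof (pow2_ge_0 (Cmod (L m))). replace (0^2) with 0 by ring. nra.
    - replace (Nat.leb 3 m) with true by (symmetry; apply Nat.leb_le; apply Nat.ltb_ge in E3; lia).
      replace (u m - f m - RtoC 0)%C with ((y k0 m - f m) + E m + L m)%C by (rewrite Hu by exact Hm; ring).
      assert (Cmod ((y k0 m - f m) + E m + L m)%C <= Cmod (y k0 m - f m) + Cmod (E m) + Cmod (L m)).
      { eapply Rle_trans. apply Cmod_triangle. pose proof (Cmod_triangle (y k0 m - f m) (E m)). lra. }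
      assert ((Cmod ((y k0 m - f m) + E m + L m)%C)^2 <= (Cmod (y k0 m - f m) + Cmod (E m) + Cmod (L m))^2).
      { pose proof (Cmod_ge_0 ((y k0 m - f m) + E m + L m)%C). apply pow_incr. lra. }
      pose proof (three_sq (Cmod (y k0 m - f m)) (Cmod (E m)) (Cmod (L m))). nra. }
  rewrite sum_n_R_scal. apply Rmult_le_compat_l. lra.
  rewrite !sum_n_R_plus.
  assert (H1 := Happ M).
  assert (H2 : sum_n (fun m => if Nat.leb 3 m then w m * (Cmod (E m))^2 else 0) M <= (1/2)^k0).
  { eapply Rle_trans. apply E_bound; eauto.
    replace (sum_n (fun k => if Nat.ltb k k0 then sum_n (fun j => Cmod (y k j)) (D k) else 0) B)
      with (sum_n (fun k => if Nat.ltb k k0 then sum_n (fun j => Cmod (y k j)) (D k) else 0) k0).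
    exact HR. symmetry. apply (sum_n_extendG (G:=R_AbelianMonoid)).
    intros i Hi. replace (Nat.ltb i k0) with false. reflexivity. symmetry; apply Nat.ltb_ge; lia.
    unfold B; lia. }
  assert (H3 : sum_n (fun m => w m * (Cmod (L m))^2) M <= (1/2)^k0).
  { eapply Rle_trans. apply (L_bound y D g n (fun k => Nat.ltb k0 k)); auto.
    - intros k Hk. apply Nat.ltb_lt in Hk. unfold n. destruct k as [|k']. lia. simpl.
      pose proof (nn_mono g k0 k' ltac:(lia)). lia.
    - rewrite geom_tail. pose proof (pow_lt (1/2) (Nat.max B k0) ltac:(lra)). lra. }
  replace (delta + 2 * (1/2)^k0) with (delta + (1/2)^k0 + (1/2)^k0) by ring.
  apply Rplus_le_compat; [apply Rplus_le_compat|]; assumption.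
Qed.

Lemma arch_nat (x : R) : exists N : nat, x < INR N.
Proof.
  destruct (archimed x) as [H1 H2].
  destruct (Z_le_gt_dec 0 (up x)) as [Hz|Hz].
  - exists (Z.to_nat (up x)). rewrite INR_IZR_INZ, Z2Nat.id by exact Hz. lra.
  - exists 0%nat. simpl. assert (IZR (up x) < 0) by (apply IZR_lt; lia). lra.
Qed.

Lemma pow2_ge_INR (g : nat) : INR g <= 2^g.
Proof.
  induction g. simpl; lra. rewrite S_INR. simpl.
  assert (1 <= 2^g) by (apply pow_R1_Rle; lra). lra.
Qed.

Lemma arch_pow (x : R) : exists N : nat, forall g, (N <= g)%nat -> x <= 2^g.
Proof.
  destruct (arch_nat x) as [N HN]. exists N. intros g Hg.
  apply le_INR in Hg. pose proof (pow2_ge_INR g). lra.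
Qed.

Lemma escape_fin (Hc : no_nontrivial_positive_cycle) J M :
  exists G, forall j t, (j <= J)%nat -> (G <= t)%nat -> (Ti t j <= 2)%nat \/ (M <= Ti t j)%nat.
Proof.
  induction J as [|J [G HG]].
  - destruct (escape Hc 0 M) as [G HG]. exists G. intros j t Hj Ht.
    replace j with 0%nat by lia. apply HG; exact Ht.
  - destruct (escape Hc (S J) M) as [G' HG']. exists (Nat.max G G'). intros j t Hj Ht.
    destruct (Nat.eq_dec j (S J)). subst. apply HG'; lia. apply HG; lia.
Qed.

Lemma escape_blocks (Hc : no_nontrivial_positive_cycle) (D : nat -> nat) K M :
  exists G, forall k j t, (k < K)%nat -> (j <= D k)%nat -> (G <= t)%nat -> (Ti t j <= 2)%nat \/ (M <= Ti t j)%nat.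
Proof.
  induction K as [|K [G HG]].
  - exists 0%nat. intros; lia.
  - destruct (escape_fin Hc (D K) M) as [G' HG']. exists (Nat.max G G'). intros k j t Hk Hj Ht.
    destruct (Nat.eq_dec k K). subst. apply HG'; lia. apply (HG k); lia.
Qed.

Lemma half_pow_pos k : 0 < (1/2)^k.
Proof. apply pow_lt; lra. Qed.

Lemma half_pow_mul k : (1/2)^k * 2^k = 1.
Proof. rewrite <- Rpow_mult_distr. replace (1/2*2) with 1 by field. apply pow1. Qed.

Lemma choose_M0 (c : R) k : exists M0 : nat, PI / INR (S M0) * c^2 <= (1/2)^k.
Proof.
  destruct (arch_nat (PI * c^2 * 2^k)) as [N HN]. exists N.
  assert (HS : 0 < INR (S N)) by (apply lt_0_INR; lia).
  rewrite S_INR in *.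
  assert (H2 : 0 < 2^k) by (apply pow_lt; lra).
  pose proof (half_pow_mul k).
  apply Rmult_le_reg_r with (INR N + 1 ). lra.
  replace (PI / (INR N + 1) * c ^ 2 * (INR N + 1)) with (PI * c^2) by (field; lra).
  apply Rmult_le_reg_r with (2^k). exact H2.
  replace ((1 / 2) ^ k * (INR N + 1) * 2 ^ k) with (INR N + 1) by (rewrite Rmult_comm, <- Rmult_assoc, (Rmult_comm (2^k)), half_pow_mul; ring).
  lra.
Qed.

Lemma choose_g (Hc : no_nontrivial_positive_cycle) (y : nat -> nat -> C) (D : nat -> nat) (M0 : nat) k :
  exists gk : nat, (1 <= gk)%nat /\ (D (pred k) < 3 * 2^gk)%nat /\
    PI / (3 * 2^gk) * sum_n (fun j => (Cmod (y k j))^2) (D k) <= (1/2)^k /\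
    (forall k' j t, (k' < k)%nat -> (j <= D k')%nat -> (gk <= t)%nat -> (Ti t j <= 2)%nat \/ (M0 <= Ti t j)%nat).
Proof.
  destruct (escape_blocks Hc D k M0) as [G3 HG3].
  set (Y := sum_n (fun j => (Cmod (y k j))^2) (D k)).
  destruct (arch_pow (PI * Y * 2^k / 3)) as [N2 HN2].
  exists (Nat.max 1 (Nat.max G3 (Nat.max (D (pred k)) N2))).
  set (gk := Nat.max 1 (Nat.max G3 (Nat.max (D (pred k)) N2))).
  split; [unfold gk; lia|]. split.
  { pose proof (Nat.pow_gt_lin_r 2 gk ltac:(lia)). unfold gk in *. lia. }
  split.
  - specialize (HN2 gk ltac:(unfold gk; lia)).
    assert (H2 : 0 < 2^gk) by (apply pow_lt; lra).
    assert (H2k : 0 < 2^k) by (apply pow_lt; lra).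
    assert (HY : 0 <= Y) by (apply sum_n_R_nonneg; intros; apply pow2_ge_0).
    pose proof (half_pow_mul k).
    apply Rmult_le_reg_r with (3 * 2^gk * 2^k). nra.
    replace (PI / (3 * 2 ^ gk) * Y * (3 * 2 ^ gk * 2 ^ k)) with (PI * Y * 2^k) by (field; lra).
    replace ((1 / 2) ^ k * (3 * 2 ^ gk * 2 ^ k)) with (3 * 2^gk) by
      (transitivity (3 * 2^gk * ((1/2)^k * 2^k)); [rewrite half_pow_mul; ring| ring]).
    apply Rmult_le_reg_r with (/3). lra.
    replace (3 * 2^gk * /3) with (2^gk) by field. unfold Rdiv in HN2. lra.
  - intros k' j t Hk Hj Ht. apply (HG3 k'); auto. unfold gk in Ht; lia.
Qed.

Lemma vv_bergman y D g :
  (forall k j, (j < 3)%nat -> y k j = RtoC 0) -> (forall k, 1 <= g k)%nat ->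
  (forall k, D k < 3 * 2^(g (S k)))%nat ->
  (forall k, PI / (3 * 2^(g k)) * sum_n (fun j => (Cmod (y k j))^2) (D k) <= (1/2)^k) ->
  in_bergman (vv y D g).
Proof.
  intros Hy0 Hg HC1 HC2.
  assert (H := series_bound (bergman_terms (vv y D g)) 2).
  apply H.
  - intro m. unfold bergman_terms. apply Rmult_le_pos. left; apply (w_pos m). apply pow2_ge_0.
  - intro M. unfold bergman_terms.
    rewrite (sum_n_ext_loc _ (fun m => w m * (Cmod (sum_n (fun k => if (fun _ => true) k then Sblk y D g 0 k m else RtoC 0) M))^2)).
    + eapply Rle_trans. apply (L_bound y D g 0 (fun _ => true)); auto.
      intros k _. destruct k; simpl; lia.
      simpl. rewrite geom_all. pose proof (pow_lt (1/2) (S M) ltac:(lra)). lra.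
    + intros m Hm. unfold w. f_equal. f_equal. f_equal.
      change (vv y D g m) with (Nat.iter 0 collatz_op (vv y D g) m).
      rewrite (iter_formula y D g 0 m M Hy0 Hg) by (simpl; lia). reflexivity.
Qed.

Definition dec4 (c : nat) : nat * nat * nat * nat :=
  let (a, r1) := Cantor.of_nat c in let (b, r2) := Cantor.of_nat r1 in
  let (cc, d) := Cantor.of_nat r2 in (a, b, cc, d).

Definition enc4 (a b cc d : nat) : nat := Cantor.to_nat (a, Cantor.to_nat (b, Cantor.to_nat (cc, d))).

Lemma dec_enc4 a b cc d : dec4 (enc4 a b cc d) = (a, b, cc, d).
Proof. unfold dec4, enc4. rewrite !Cantor.cancel_of_to. reflexivity. Qed.

Definition coefC (q c : nat) : C :=
  match dec4 c with (a, b, cc, d) => ((INR a - INR b) / INR (S q), (INR cc - INR d) / INR (S q)) end.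

Fixpoint decj (s i : nat) : nat :=
  match i with O => fst (Cantor.of_nat s) | S i' => decj (snd (Cantor.of_nat s)) i' end.

Lemma decj_surj L : forall (h : nat -> nat), exists s, forall i, (i <= L)%nat -> decj s i = h i.
Proof.
  induction L; intro h.
  - exists (Cantor.to_nat (h 0%nat, 0%nat)). intros i Hi. replace i with 0%nat by lia. cbn [decj].
    rewrite Cantor.cancel_of_to. reflexivity.
  - destruct (IHL (fun i => h (S i))) as [s Hs].
    exists (Cantor.to_nat (h 0%nat, s)). intros [|i] Hi; cbn [decj]; rewrite Cantor.cancel_of_to; cbn [fst snd].
    reflexivity. apply Hs. lia.
Qed.

Definition ytgt (t m : nat) : C :=
  let (q, r) := Cantor.of_nat t in let (Dd, s) := Cantor.of_nat r in
  if andb (Nat.leb 3 m) (Nat.leb m Dd) then coefC q (decj s (m - 3)) else RtoC 0.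

Definition Dtgt (t : nat) : nat := fst (Cantor.of_nat (snd (Cantor.of_nat t))).

Definition Yk (k : nat) : nat -> C := ytgt (fst (Cantor.of_nat k)).
Definition DDk (k : nat) : nat := Dtgt (fst (Cantor.of_nat k)).

Lemma Yk_lo k j : (j < 3)%nat -> Yk k j = RtoC 0.
Proof.
  intro H. unfold Yk, ytgt. destruct (Cantor.of_nat (fst (Cantor.of_nat k))) as [q r].
  destruct (Cantor.of_nat r) as [Dd s]. replace (Nat.leb 3 j) with false. reflexivity.
  symmetry; apply Nat.leb_gt; lia.
Qed.

Lemma Yk_hi k j : (DDk k < j)%nat -> Yk k j = RtoC 0.
Proof.
  intro H. unfold Yk, DDk, Dtgt, ytgt in *. destruct (Cantor.of_nat (fst (Cantor.of_nat k))) as [q r].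
  simpl in H. destruct (Cantor.of_nat r) as [Dd s]. simpl in H.
  replace (Nat.leb j Dd) with false. rewrite Bool.andb_false_r. reflexivity.
  symmetry; apply Nat.leb_gt; lia.
Qed.

Definition rnd (Q x : R) : nat * nat :=
  (Z.to_nat (up (Q * x)), Z.to_nat (- up (Q * x))).

Lemma rnd_spec (Q x : R) : 0 < Q ->
  Rabs ((INR (fst (rnd Q x)) - INR (snd (rnd Q x))) / Q - x) <= 1 / Q.
Proof.
  intro HQ. unfold rnd; simpl.
  assert (E : INR (Z.to_nat (up (Q * x))) - INR (Z.to_nat (- up (Q * x))) = IZR (up (Q * x))).
  { rewrite !INR_IZR_INZ. destruct (Z_le_gt_dec 0 (up (Q*x))).
    - rewrite Z2Nat.id by lia. replace (Z.to_nat (- up (Q * x))) with 0%nat by lia. simpl. lra.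
    - rewrite (Z2Nat.id (- _)) by lia. replace (Z.to_nat (up (Q * x))) with 0%nat by lia.
      rewrite opp_IZR. simpl. lra. }
  rewrite E. destruct (archimed (Q * x)) as [H1 H2].
  replace (IZR (up (Q * x)) / Q - x) with ((IZR (up (Q * x)) - Q * x) / Q) by (field; lra).
  rewrite Rabs_right.
  - unfold Rdiv. apply Rmult_le_compat_r. left; apply Rinv_0_lt_compat; lra. lra.
  - apply Rle_ge. unfold Rdiv. apply Rmult_le_pos. lra. left; apply Rinv_0_lt_compat; lra.
Qed.

Lemma fst_Cminus (a b : C) : fst (a - b)%C = fst a - fst b.
Proof. reflexivity. Qed.
Lemma snd_Cminus (a b : C) : snd (a - b)%C = snd a - snd b.
Proof. reflexivity. Qed.

Lemma Cmod_sq (z : C) : (Cmod z)^2 = (fst z)^2 + (snd z)^2.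
Proof. unfold Cmod. apply pow2_sqrt. pose proof (pow2_ge_0 (fst z)). pose proof (pow2_ge_0 (snd z)). lra. Qed.

Lemma approx (f : nat -> C) (delta : R) (K0 : nat) :
  in_bergman f -> 0 < delta ->
  exists k, (K0 <= k)%nat /\ forall M,
    sum_n (fun m => if Nat.leb 3 m then w m * (Cmod (Yk k m - f m))^2 else 0) M <= delta.
Proof.
  intros Hf Hd.
  destruct (Cauchy_ex_series _ Hf (mkposreal (delta/2) ltac:(lra))) as [N HN]. simpl in HN.
  destruct (arch_nat (4 * PI * (INR N + 1) / delta)) as [q Hq].
  set (Q := INR (S q)).
  assert (HQ1 : 1 <= Q) by (unfold Q; rewrite S_INR; pose proof (pos_INR q); lra).
  assert (HQ : INR q < Q) by (unfold Q; rewrite S_INR; lra).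
  set (h := fun i => let '(a, b) := rnd Q (fst (f (i + 3)%nat)) in let '(cc, d) := rnd Q (snd (f (i + 3)%nat)) in
                     enc4 a b cc d).
  destruct (decj_surj N h) as [s Hs].
  set (t := Cantor.to_nat (q, Cantor.to_nat (N, s))).
  exists (Cantor.to_nat (t, K0)). split. pose proof (Cantor.to_nat_non_decreasing t K0). lia.
  assert (HY : forall m, Yk (Cantor.to_nat (t, K0)) m =
            if andb (Nat.leb 3 m) (Nat.leb m N) then coefC q (h (m - 3)%nat) else RtoC 0).
  { intro m. unfold Yk. rewrite Cantor.cancel_of_to. simpl. unfold ytgt, t. rewrite !Cantor.cancel_of_to.
    destruct (andb _ _) eqn:E; [|reflexivity]. apply andb_prop in E. destruct E as [_ E].
    apply Nat.leb_le in E. rewrite Hs by lia. reflexivity. }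
  set (bt := bergman_terms f).
  assert (Hbt : forall m, 0 <= bt m).
  { intro m. unfold bt, bergman_terms. apply Rmult_le_pos. left; apply (w_pos m). apply pow2_ge_0. }
  set (h' := fun m => if Nat.leb m N then 2 * PI / Q else bt m).
  intro M.
  apply Rle_trans with (sum_n h' M).
  { apply sum_n_R_le. intros m _. unfold h'. rewrite HY.
    destruct (Nat.leb 3 m) eqn:E3.
    - destruct (Nat.leb m N) eqn:EN; simpl.
      + assert (Hw : w m <= PI).
        { unfold w. unfold Rdiv. pose proof PI_RGT_0.
          assert (1 <= INR (S m)) by (rewrite S_INR; pose proof (pos_INR m); lra).
          assert (/ INR (S m) <= 1). { rewrite <- Rinv_1. apply Rinv_le_contravar; lra. }
          nra. }
        assert (Hc : (Cmod (coefC q (h (m - 3)%nat) - f m))^2 <= 2 / Q).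
        { rewrite Cmod_sq. unfold h. replace (m - 3 + 3)%nat with m by (apply Nat.leb_le in E3; lia).
          destruct (rnd Q (fst (f m))) as [a b] eqn:Ea. destruct (rnd Q (snd (f m))) as [cc d] eqn:Ec.
          unfold coefC. rewrite dec_enc4. simpl fst. simpl snd.
          pose proof (rnd_spec Q (fst (f m)) ltac:(lra)) as R1. rewrite Ea in R1. simpl in R1.
          pose proof (rnd_spec Q (snd (f m)) ltac:(lra)) as R2. rewrite Ec in R2. simpl in R2.
          fold Q.
          assert (B1 : ((INR a - INR b) / Q - fst (f m))^2 <= (1/Q)^2).
          { rewrite <- Rsqr_pow2, <- Rsqr_pow2. apply Rsqr_le_abs_1. rewrite (Rabs_right (1/Q)). exact R1.
            apply Rle_ge. unfold Rdiv; apply Rmult_le_pos; [lra|left; apply Rinv_0_lt_compat; lra]. }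
          assert (B2 : ((INR cc - INR d) / Q - snd (f m))^2 <= (1/Q)^2).
          { rewrite <- Rsqr_pow2, <- Rsqr_pow2. apply Rsqr_le_abs_1. rewrite (Rabs_right (1/Q)). exact R2.
            apply Rle_ge. unfold Rdiv; apply Rmult_le_pos; [lra|left; apply Rinv_0_lt_compat; lra]. }
          assert ((1/Q)^2 <= 1/Q).
          { replace ((1/Q)^2) with ((1/Q) * (1/Q)) by ring.
            assert (0 < 1/Q) by (unfold Rdiv; apply Rmult_lt_0_compat; [lra|apply Rinv_0_lt_compat; lra]).
            assert (1/Q <= 1). { unfold Rdiv. rewrite Rmult_1_l. rewrite <- Rinv_1. apply Rinv_le_contravar; lra. }
            nra. }
          replace (2 / Q) with (1/Q + 1/Q) by (field; lra).
          change (fst ((INR a - INR b) / Q, (INR cc - INR d) / Q)%R) with ((INR a - INR b) / Q).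
          change (match q with 0%nat => 1 | S _ => INR q + 1 end) with Q. unfold Rminus in *. lra. }
        pose proof (w_pos m). pose proof (pow2_ge_0 (Cmod (coefC q (h (m - 3)%nat) - f m))).
        replace (2 * PI / Q) with (PI * (2 / Q)) by (field; lra).
        apply Rmult_le_compat; lra.
      + replace (RtoC 0 - f m)%C with (- f m)%C by ring. rewrite Cmod_opp. apply Rle_refl.
    - destruct (Nat.leb m N); [|apply Hbt].
      apply Rlt_le, Rdiv_lt_0_compat; [pose proof PI_RGT_0; lra|lra]. }
  assert (Hsmall : INR (S N) * (2 * PI / Q) <= delta / 2).
  { rewrite S_INR. pose proof PI_RGT_0. pose proof (pos_INR N).
    assert (4 * PI * (INR N + 1) / delta < Q) by lra.
    apply Rmult_le_reg_r with Q. lra.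
    replace ((INR N + 1) * (2 * PI / Q) * Q) with (2 * PI * (INR N + 1)) by (field; lra).
    apply Rmult_le_reg_r with (2 / delta). apply Rdiv_lt_0_compat; lra.
    replace (delta / 2 * Q * (2 / delta)) with Q by (field; lra).
    replace (2 * PI * (INR N + 1) * (2 / delta)) with (4 * PI * (INR N + 1) / delta) by (field; lra).
    lra. }
  destruct (le_lt_dec M N) as [HMN|HMN].
  - rewrite (sum_n_ext_loc h' (fun _ => 2 * PI / Q)).
    + rewrite sum_n_const. apply Rle_trans with (INR (S N) * (2 * PI / Q)); [|lra].
      apply Rmult_le_compat_r. apply Rlt_le, Rdiv_lt_0_compat; [pose proof PI_RGT_0; lra|lra].
      apply le_INR. lia.
    + intros m Hm. unfold h'. replace (Nat.leb m N) with true. reflexivity. symmetry; apply Nat.leb_le; lia.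
  - unfold sum_n. rewrite (sum_n_m_Chasles h' 0 N M) by lia.
    change (plus ?a ?b) with (a + b).
    rewrite (sum_n_m_ext_loc h' (fun _ => 2 * PI / Q) 0 N).
    2:{ intros m Hm. unfold h'. replace (Nat.leb m N) with true. reflexivity. symmetry; apply Nat.leb_le; lia. }
    rewrite (sum_n_m_ext_loc h' bt (S N) M).
    2:{ intros m Hm. unfold h'. replace (Nat.leb m N) with false. reflexivity. symmetry; apply Nat.leb_gt; lia. }
    rewrite sum_n_m_const. replace (S N - 0)%nat with (S N) by lia.
    specialize (HN (S N) M ltac:(lia) ltac:(lia)).
    change (norm (sum_n_m bt (S N) M)) with (Rabs (sum_n_m bt (S N) M)) in HN.
    pose proof (Rle_abs (sum_n_m bt (S N) M)) as HA.
    apply Rle_trans with (delta/2 + delta/2); [|lra].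
    apply Rplus_le_compat. exact Hsmall.
    eapply Rle_trans; [exact HA|]. left; exact HN.
Qed.

Lemma half_pow_anti a b : (a <= b)%nat -> (1/2)^b <= (1/2)^a.
Proof.
  intro H. replace b with (a + (b - a))%nat by lia. rewrite pow_add.
  pose proof (half_pow_pos a).
  assert (H1 : (1/2)^(b-a) <= 1^(b-a)) by (apply pow_incr; lra). rewrite pow1 in H1.
  pose proof (half_pow_pos (b - a)). nra.
Qed.

Theorem mainTheorem2 :
  no_nontrivial_positive_cycle ->
  exists v : nat -> C, in_bergman v /\
    forall f : nat -> C, in_bergman f ->
    forall eps : R, 0 < eps ->
    exists (n : nat) (x : nat -> C), in_X x /\
      in_bergman (fun k => Nat.iter n collatz_op v k - f k - x k)%C /\
      bergman_norm (fun k => Nat.iter n collatz_op v k - f k - x k)%C < eps.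
Proof.
  intro Hc.
  set (y := Yk). set (D := DDk).
  set (Rk := fun k => sum_n (fun k' => if Nat.ltb k' k then sum_n (fun j => Cmod (y k' j)) (D k') else 0) k).
  set (M0 := fun k => proj1_sig (constructive_indefinite_description _ (choose_M0 (Rk k) k))).
  assert (HM0 : forall k, PI / INR (S (M0 k)) * (Rk k)^2 <= (1/2)^k).
  { intro k. unfold M0. destruct (constructive_indefinite_description _ _) as [m Hm]. exact Hm. }
  set (g := fun k => proj1_sig (constructive_indefinite_description _ (choose_g Hc y D (M0 k) k))).
  assert (Hgk : forall k, (1 <= g k)%nat /\ (D (pred k) < 3 * 2^(g k))%nat /\
    PI / (3 * 2^(g k)) * sum_n (fun j => (Cmod (y k j))^2) (D k) <= (1/2)^k /\
    (forall k' j t, (k' < k)%nat -> (j <= D k')%nat -> (g k <= t)%nat -> (Ti t j <= 2)%nat \/ (M0 k <= Ti t j)%nat)).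
  { intro k. unfold g. destruct (constructive_indefinite_description _ _) as [m Hm]. exact Hm. }
  assert (Hy0 : forall k j, (j < 3)%nat -> y k j = RtoC 0) by (intros; apply Yk_lo; auto).
  assert (HyD : forall k j, (D k < j)%nat -> y k j = RtoC 0) by (intros; apply Yk_hi; auto).
  assert (Hg1 : forall k, (1 <= g k)%nat) by (intro k; apply (Hgk k)).
  assert (HC1 : forall k, (D k < 3 * 2^(g (S k)))%nat) by (intro k; apply (Hgk (S k))).
  assert (HC2 : forall k, PI / (3 * 2^(g k)) * sum_n (fun j => (Cmod (y k j))^2) (D k) <= (1/2)^k)
    by (intro k; apply (Hgk k)).
  exists (vv y D g). split.
  { apply vv_bergman; auto. }
  intros f Hf eps Heps.
  destruct (arch_pow (24 / eps^2)) as [K0 HK0].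
  assert (HK0' : (1/2)^K0 <= eps^2 / 24).
  { specialize (HK0 K0 (le_n _)). pose proof (half_pow_mul K0). pose proof (half_pow_pos K0).
    assert (0 < eps^2) by (apply pow_lt; lra).
    apply Rmult_le_reg_r with (2^K0). apply pow_lt; lra.
    rewrite H. apply Rmult_le_reg_l with (24 / eps^2). apply Rdiv_lt_0_compat; lra.
    replace (24 / eps ^ 2 * (eps ^ 2 / 24 * 2 ^ K0)) with (2^K0) by (field; lra). lra. }
  assert (Hdelta : 0 < eps^2/12) by (apply Rdiv_lt_0_compat; [apply pow_lt; lra|lra]).
  destruct (approx f (eps^2/12) K0 Hf Hdelta) as [k0 [Hk0 Happ]].
  pose proof (half_pow_anti K0 k0 Hk0) as Hhalf.
  set (n := nn g k0).
  exists n, (fun k => if Nat.ltb k 3 then (Nat.iter n collatz_op (vv y D g) k - f k)%C else RtoC 0).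
  split.
  { intros m Hm. replace (Nat.ltb m 3) with false. reflexivity. symmetry; apply Nat.ltb_ge; lia. }
  assert (Hasm := assembly y D g (M0 k0) k0 f (eps^2/12) Hy0 HyD Hg1 HC1 HC2 (proj2 (proj2 (proj2 (Hgk k0)))) (HM0 k0) Happ).
  set (B := 3 * (eps^2/12 + 2 * (1/2)^k0)).
  assert (HB : B < eps^2). { unfold B. pose proof (half_pow_pos k0). lra. }
  destruct (series_bound (bergman_terms (fun k => Nat.iter n collatz_op (vv y D g) k - f k
        - (if Nat.ltb k 3 then Nat.iter n collatz_op (vv y D g) k - f k else RtoC 0))%C) B) as [Hex Hser].
  { intro m. unfold bergman_terms. apply Rmult_le_pos. left; apply (w_pos m). apply pow2_ge_0. }
  { exact Hasm. }
  split. exact Hex.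
  unfold bergman_norm.
  assert (0 <= B) by (unfold B; pose proof (half_pow_pos k0); lra).
  eapply Rle_lt_trans. apply sqrt_le_1_alt. exact Hser.
  rewrite <- (sqrt_pow2 eps) by lra. apply sqrt_lt_1; auto. apply pow2_ge_0.
Qed.
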